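(* Let $\varepsilon>0$, $\theta_0>0$, $\Delta t>0$, $N\in\mathbb{N}$, $h=L/N$, and assume the mobility is constant, $\mathcal{M}\equiv 1$. Consider the scheme: given $\phi^n\in\mathcal{C}_{\rm per}$, find $\phi^{n+1},\mu^{n+1}\in\mathcal{C}_{\rm per}$ with $$\frac{\phi^{n+1}-\phi^n}{\Delta t}=-\mu^{n+1},\qquad \mu^{n+1}=\ln(1+\phi^{n+1})-\ln(1-\phi^{n+1})-\theta_0\phi^n-\varepsilon^2\Delta_h\phi^{n+1}$$ (all operations pointwise on the grid except $\Delta_h$). Given $\phi^n\in\mathcal{C}_{\rm per}$ with $\|\phi^n\|_\infty\le M$ for some $M>0$, there exists a unique solution $\phi^{n+1}\in\mathcal{C}_{\rm per}$ of this scheme with $\|\phi^{n+1}\|_\infty<1$. Moreover, if the initial data satisfy $\|\phi^0\|_\infty\le 1-\delta_0$ for some $\delta_0\in(0,1)$, then there exists $\delta^\star\in(0,1)$, depending upon $\delta_0$ but independent of $\varepsilon$ and $n$, such that the iterates of the scheme satisfy $\|\phi^n\|_\infty\le 1-\delta^\star$ for all $n\in\mathbb{N}$.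
   Context: $\Omega=(0,L)^3$ with periodic boundary conditions. Grid points $p_i=(i-\tfrac12)h$, $h=L/N$. $\mathcal{C}_{\rm per}$ is the space of real grid functions $\nu_{i,j,k}$ on the cell centers $(p_i,p_j,p_k)$, $i,j,k\in\mathbb{Z}$, that are $N$-periodic in each index. The discrete Laplacian is $\Delta_h\nu_{i,j,k}=h^{-2}(\nu_{i+1,j,k}+\nu_{i-1,j,k}+\nu_{i,j+1,k}+\nu_{i,j-1,k}+\nu_{i,j,k+1}+\nu_{i,j,k-1}-6\nu_{i,j,k})$. $\|\nu\|_\infty=\max_{1\le i,j,k\le N}|\nu_{i,j,k}|$. The scheme is a discretization of the Allen–Cahn equation with the Flory–Huggins energy $\int_\Omega (1+\phi)\ln(1+\phi)+(1-\phi)\ln(1-\phi)-\frac{\theta_0}{2}\phi^2+\frac{\varepsilon^2}{2}|\nabla\phi|^2$. *)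

(* Defs.v *)
From Stdlib Require Import Reals Lra Lia ZArith List.
Open Scope R_scope.

Definition grid := Z -> Z -> Z -> R.

(* Membership in C_per: N-periodic in each index. *)
Definition periodic (N : nat) (f : grid) : Prop :=
  forall i j k : Z,
    f (i + Z.of_nat N)%Z j k = f i j k /\
    f i (j + Z.of_nat N)%Z k = f i j k /\
    f i j (k + Z.of_nat N)%Z = f i j k.

Definition maxR (n : nat) (g : nat -> R) : R :=
  fold_right Rmax 0 (map g (seq 1 n)).

Definition normInf (N : nat) (f : grid) : R :=
  maxR N (fun i => maxR N (fun j => maxR N (fun k =>
    Rabs (f (Z.of_nat i) (Z.of_nat j) (Z.of_nat k))))).

Definition lap_h (h : R) (f : grid) : grid := fun i j k =>
  (f (i+1)%Z j k + f (i-1)%Z j k + f i (j+1)%Z k + f i (j-1)%Z k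
   + f i j (k+1)%Z + f i j (k-1)%Z - 6 * f i j k) / (h ^ 2).

Definition mu_next (eps theta0 h : R) (phin phi1 : grid) : grid := fun i j k =>
  ln (1 + phi1 i j k) - ln (1 - phi1 i j k) - theta0 * phin i j k
  - eps ^ 2 * lap_h h phi1 i j k.

Definition scheme_step (eps theta0 dt h : R) (phin phi1 : grid) : Prop :=
  forall i j k : Z,
    (phi1 i j k - phin i j k) / dt = - mu_next eps theta0 h phin phi1 i j k.

(* Main.v *)
Require Import Defs.
From Stdlib Require Import Reals Lra Lia List ZArith Ranalysis5 FunctionalExtensionality.
Open Scope R_scope.

Lemma ln_le' x y : 0 < x -> x <= y -> ln x <= ln y.
Proof. intros Hx [H|H]. left; apply ln_increasing; auto. subst; lra. Qed.

Definition hf (dt c x : R) := x / dt + (ln (1 + x) - ln (1 - x)) + 6 * c * x.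

Lemma hf_mono dt c x1 x2 : 0 < dt -> 0 <= c -> -1 < x2 -> x2 <= x1 -> x1 < 1 ->
  (/dt + 6*c) * (x1 - x2) <= hf dt c x1 - hf dt c x2.
Proof.
  intros. unfold hf.
  assert (ln (1 + x2) <= ln (1 + x1)) by (apply ln_le'; lra).
  assert (ln (1 - x1) <= ln (1 - x2)) by (apply ln_le'; lra).
  unfold Rdiv. nra.
Qed.

Lemma hf_lip dt c x1 x2 : 0 < dt -> 0 <= c -> -1 < x1 < 1 -> -1 < x2 < 1 ->
  Rabs (x1 - x2) * (/dt + 6*c) <= Rabs (hf dt c x1 - hf dt c x2).
Proof.
  intros. assert (0 < /dt) by (apply Rinv_0_lt_compat; lra).
  destruct (Rle_dec x2 x1).
  - pose proof (hf_mono dt c x1 x2 ltac:(lra) ltac:(lra) ltac:(lra) ltac:(lra) ltac:(lra)).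
    rewrite !Rabs_right; nra.
  - pose proof (hf_mono dt c x2 x1 ltac:(lra) ltac:(lra) ltac:(lra) ltac:(lra) ltac:(lra)).
    rewrite !Rabs_left1; nra.
Qed.

Lemma cont_ln_aff (s a : R) : 0 < 1 + s * a -> continuity_pt (fun x => ln (1 + s * x)) a.
Proof.
  intros H.
  apply (continuity_pt_comp (fun x => 1 + s * x) ln).
  - apply derivable_continuous_pt. reg.
  - apply derivable_continuous_pt. exists (/ (1 + s*a)). apply derivable_pt_lim_ln; auto.
Qed.

Lemma hf_cont dt c y a : -1 < a < 1 -> continuity_pt (fun x => hf dt c x - y) a.
Proof.
  intros H. unfold hf.
  pose proof (cont_ln_aff 1 a ltac:(lra)) as H1.
  pose proof (cont_ln_aff (-1) a ltac:(lra)) as H2.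
  assert (E1: (fun x => ln (1 + 1 * x)) = (fun x => ln (1 + x))).
  { apply FunctionalExtensionality.functional_extensionality; intro x; f_equal; ring. }
  assert (E2: (fun x => ln (1 + -1 * x)) = (fun x => ln (1 - x))).
  { apply FunctionalExtensionality.functional_extensionality; intro x; f_equal; ring. }
  rewrite E1 in H1; rewrite E2 in H2.
  apply (continuity_pt_minus (fun x => x / dt + (ln (1 + x) - ln (1 - x)) + 6 * c * x) (fun _ => y)).
  2: apply continuity_pt_const; intros ? ?; reflexivity.
  apply (continuity_pt_plus (fun x => x / dt + (ln (1 + x) - ln (1 - x))) (fun x => 6 * c * x)).
  2: apply derivable_continuous_pt; reg.
  apply (continuity_pt_plus (fun x => x / dt) (fun x => ln (1 + x) - ln (1 - x))).
  - apply derivable_continuous_pt; reg.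
  - apply (continuity_pt_minus (fun x => ln (1 + x)) (fun x => ln (1 - x))); auto.
Qed.

Lemma hinv (dt c y : R) : 0 < dt -> 0 <= c -> {x : R | -1 < x < 1 /\ hf dt c x = y}.
Proof.
  intros Hdt Hc.
  set (b := 1 - exp (- (Rabs y + 1))).
  assert (Hе : 0 < exp (- (Rabs y + 1)) < 1).
  { split. apply exp_pos. assert (exp (- (Rabs y + 1)) < exp 0) by (apply exp_increasing; pose proof (Rabs_pos y); lra). rewrite exp_0 in H; exact H. }
  assert (Lb : ln (1 - b) = - (Rabs y + 1)) by (unfold b; replace (1 - (1 - exp (- (Rabs y + 1)))) with (exp (- (Rabs y + 1))) by ring; apply ln_exp).
  assert (L1 : 0 <= ln (1 + b)) by (rewrite <- ln_1; apply ln_le'; unfold b; lra).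
  assert (0 < /dt) by (apply Rinv_0_lt_compat; lra).
  assert (Hb : 0 < b < 1) by (unfold b; lra).
  destruct (IVT_interv (fun x => hf dt c x - y) (-b) b) as [z [Hz1 Hz2]].
  - intros a Ha. apply hf_cont. lra.
  - lra.
  - unfold hf. replace (1 - - b) with (1 + b) by ring. replace (1 + - b) with (1 - b) by ring. rewrite Lb.
    pose proof (Rle_abs (-y)) as Hy. rewrite Rabs_Ropp in Hy. unfold Rdiv. assert (0 <= b * /dt) by nra. assert (0<=c*b) by nra. lra.
  - unfold hf. rewrite Lb. pose proof (Rle_abs y). unfold Rdiv. assert (0 <= b * /dt) by nra. assert (0<=c*b) by nra. lra.
  - exists z. split. lra. lra.
Qed.

Lemma fold_ge (g : nat -> R) n s i : (s <= i < s + n)%nat -> g i <= fold_right Rmax 0 (map g (seq s n)).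
Proof.
  revert s; induction n; intros s H; [lia|]. simpl.
  destruct (Nat.eq_dec i s). subst; apply Rmax_l.
  eapply Rle_trans; [apply (IHn (S s)); lia | apply Rmax_r].
Qed.

Lemma fold_lt (g : nat -> R) n s B : 0 < B -> (forall i, (s <= i < s + n)%nat -> g i < B) ->
  fold_right Rmax 0 (map g (seq s n)) < B.
Proof.
  revert s; induction n; intros s HB H; simpl; auto.
  apply Rmax_lub_lt. apply H; lia. apply IHn; auto. intros; apply H; lia.
Qed.

Lemma fold_nonneg (g : nat -> R) n s : 0 <= fold_right Rmax 0 (map g (seq s n)).
Proof. revert s; induction n; intros s; simpl. lra. eapply Rle_trans; [apply (IHn (S s))|apply Rmax_r]. Qed.

Lemma fold_arg (g : nat -> R) n s : (forall i, 0 <= g i) -> (0 < n)%nat ->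
  exists i, (s <= i < s + n)%nat /\ fold_right Rmax 0 (map g (seq s n)) = g i.
Proof.
  revert s; induction n; intros s Hg Hn; [lia|]. simpl.
  destruct n.
  - exists s. split. lia. simpl. apply Rmax_left. apply Hg.
  - destruct (IHn (S s) Hg ltac:(lia)) as [i [Hi E]]. rewrite E.
    destruct (Rle_dec (g s) (g i)).
    + exists i. split. lia. apply Rmax_right; auto.
    + exists s. split. lia. apply Rmax_left; lra.
Qed.

Lemma maxR_ge g n i : (1 <= i <= n)%nat -> g i <= maxR n g.
Proof. intros; apply fold_ge; lia. Qed.
Lemma maxR_lt g n B : 0 < B -> (forall i, (1 <= i <= n)%nat -> g i < B) -> maxR n g < B.
Proof. intros; apply fold_lt; auto. intros; apply H0; lia. Qed.
Lemma maxR_nonneg g n : 0 <= maxR n g.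
Proof. apply fold_nonneg. Qed.
Lemma maxR_arg g n : (forall i, 0 <= g i) -> (0 < n)%nat -> exists i, (1 <= i <= n)%nat /\ maxR n g = g i.
Proof. intros. destruct (fold_arg g n 1 H H0) as [i [? ?]]. exists i. split. lia. auto. Qed.

Lemma normInf_box N f i j k : (1 <= i <= N)%nat -> (1 <= j <= N)%nat -> (1 <= k <= N)%nat ->
  Rabs (f (Z.of_nat i) (Z.of_nat j) (Z.of_nat k)) <= normInf N f.
Proof.
  intros. unfold normInf.
  eapply Rle_trans; [|apply (maxR_ge _ N i); auto].
  eapply Rle_trans; [|apply (maxR_ge _ N j); auto].
  apply (maxR_ge (fun k => Rabs (f (Z.of_nat i) (Z.of_nat j) (Z.of_nat k))) N k); auto.
Qed.

Lemma normInf_lt N f : (forall i j k, -1 < f i j k < 1) -> normInf N f < 1.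
Proof.
  intros H. unfold normInf. repeat (apply maxR_lt; [lra|intros ? ?]).
  specialize (H (Z.of_nat i) (Z.of_nat i0) (Z.of_nat i1)). apply Rabs_def1; lra.
Qed.

Lemma normInf_arg N f : (0 < N)%nat -> exists i j k : Z, Rabs (f i j k) = normInf N f.
Proof.
  intros HN. unfold normInf.
  destruct (maxR_arg (fun i => maxR N (fun j => maxR N (fun k => Rabs (f (Z.of_nat i) (Z.of_nat j) (Z.of_nat k))))) N (fun _ => maxR_nonneg _ _) HN) as [i [_ E1]].
  rewrite E1.
  destruct (maxR_arg (fun j => maxR N (fun k => Rabs (f (Z.of_nat i) (Z.of_nat j) (Z.of_nat k)))) N (fun _ => maxR_nonneg _ _) HN) as [j [_ E2]].
  rewrite E2.
  destruct (maxR_arg (fun k => Rabs (f (Z.of_nat i) (Z.of_nat j) (Z.of_nat k))) N (fun _ => Rabs_pos _) HN) as [k [_ E3]].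
  rewrite E3. eauto.
Qed.

Lemma per1 N f : periodic N f -> forall q i j k, f (i + q * Z.of_nat N)%Z j k = f i j k.
Proof.
  intros P q. induction q using Z.peano_ind; intros i j k.
  - f_equal; lia.
  - replace (i + Z.succ q * Z.of_nat N)%Z with ((i + q * Z.of_nat N) + Z.of_nat N)%Z by lia.
    rewrite (proj1 (P _ j k)). auto.
  - rewrite <- (IHq i j k). rewrite <- (proj1 (P (i + Z.pred q * Z.of_nat N)%Z j k)).
    f_equal; lia.
Qed.
Lemma per2 N f : periodic N f -> forall q i j k, f i (j + q * Z.of_nat N)%Z k = f i j k.
Proof.
  intros P q. induction q using Z.peano_ind; intros i j k.
  - f_equal; lia.
  - replace (j + Z.succ q * Z.of_nat N)%Z with ((j + q * Z.of_nat N) + Z.of_nat N)%Z by lia.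
    rewrite (proj1 (proj2 (P i _ k))). auto.
  - rewrite <- (IHq i j k). rewrite <- (proj1 (proj2 (P i (j + Z.pred q * Z.of_nat N)%Z k))).
    f_equal; lia.
Qed.
Lemma per3 N f : periodic N f -> forall q i j k, f i j (k + q * Z.of_nat N)%Z = f i j k.
Proof.
  intros P q. induction q using Z.peano_ind; intros i j k.
  - f_equal; lia.
  - replace (k + Z.succ q * Z.of_nat N)%Z with ((k + q * Z.of_nat N) + Z.of_nat N)%Z by lia.
    rewrite (proj2 (proj2 (P i j _))). auto.
  - rewrite <- (IHq i j k). rewrite <- (proj2 (proj2 (P i j (k + Z.pred q * Z.of_nat N)%Z))).
    f_equal; lia.
Qed.

Lemma red N (i : Z) : (0 < N)%nat -> exists r : nat, exists q : Z, (1 <= r <= N)%nat /\ i = (Z.of_nat r + q * Z.of_nat N)%Z.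
Proof.
  intros HN.
  assert (HN' : (0 < Z.of_nat N)%Z) by lia.
  pose proof (Z.mod_pos_bound (i - 1) _ HN').
  pose proof (Z.div_mod (i - 1) (Z.of_nat N) ltac:(lia)).
  exists (Z.to_nat ((i - 1) mod Z.of_nat N + 1)). exists ((i - 1) / Z.of_nat N)%Z.
  split. lia. rewrite Z2Nat.id by lia. lia.
Qed.

Lemma per_bound N f : (0 < N)%nat -> periodic N f -> forall i j k, Rabs (f i j k) <= normInf N f.
Proof.
  intros HN P i j k.
  destruct (red N i HN) as [ri [qi [Hi ->]]].
  destruct (red N j HN) as [rj [qj [Hj ->]]].
  destruct (red N k HN) as [rk [qk [Hk ->]]].
  rewrite (per1 N f P), (per2 N f P), (per3 N f P). apply normInf_box; auto.
Qed.

Lemma absb x d : Rabs x <= d -> -d <= x <= d.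
Proof. intros. pose proof (Rle_abs x). pose proof (Rle_abs (-x)). rewrite Rabs_Ropp in H1. lra. Qed.

Definition nb (v : grid) : grid := fun i j k =>
  v (i+1)%Z j k + v (i-1)%Z j k + v i (j+1)%Z k + v i (j-1)%Z k + v i j (k+1)%Z + v i j (k-1)%Z.

Definition Tm dt c (Hdt : 0 < dt) (Hc : 0 <= c) (f v : grid) : grid := fun i j k =>
  proj1_sig (hinv dt c (f i j k + c * nb v i j k) Hdt Hc).

Lemma Tm_prop dt c Hdt Hc f v i j k :
  -1 < Tm dt c Hdt Hc f v i j k < 1 /\ hf dt c (Tm dt c Hdt Hc f v i j k) = f i j k + c * nb v i j k.
Proof. unfold Tm. destruct (hinv _ _ _ _ _) as [x Hx]. simpl. auto. Qed.

Definition kk dt c := 6 * c / (/dt + 6 * c).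

Lemma kk_bounds dt c : 0 < dt -> 0 <= c -> 0 <= kk dt c < 1.
Proof.
  intros. assert (0 < /dt) by (apply Rinv_0_lt_compat; lra). unfold kk. split.
  apply Rmult_le_pos. lra. left; apply Rinv_0_lt_compat; lra.
  apply (Rmult_lt_reg_r (/dt + 6*c)). lra. unfold Rdiv. rewrite Rmult_assoc, Rinv_l by lra. lra.
Qed.

Lemma step_lip dt c x1 x2 D d : 0 < dt -> 0 <= c -> -1 < x1 < 1 -> -1 < x2 < 1 ->
  hf dt c x1 - hf dt c x2 = c * D -> Rabs D <= 6 * d -> Rabs (x1 - x2) <= kk dt c * d.
Proof.
  intros Hdt Hc H1 H2 E HD. assert (0 < /dt) by (apply Rinv_0_lt_compat; lra).
  pose proof (hf_lip dt c x1 x2 Hdt Hc H1 H2) as L. rewrite E, Rabs_mult, (Rabs_right c) in L by lra.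
  unfold kk. apply (Rmult_le_reg_r (/dt + 6*c)). lra.
  replace (6 * c / (/ dt + 6 * c) * d * (/ dt + 6 * c)) with (c * (6 * d)) by (field; try split; try lra; assert (0 < dt * (/dt + 6*c)) by (apply Rmult_lt_0_compat; lra); rewrite Rmult_plus_distr_l, Rinv_r in H0 by lra; lra).
  eapply Rle_trans. apply L. apply Rmult_le_compat_l; lra.
Qed.

Lemma nb_diff v1 v2 d i j k : (forall i j k, Rabs (v1 i j k - v2 i j k) <= d) ->
  Rabs (nb v1 i j k - nb v2 i j k) <= 6 * d.
Proof.
  intros H. apply Rabs_le. unfold nb.
  pose proof (absb _ _ (H (i+1)%Z j k)). pose proof (absb _ _ (H (i-1)%Z j k)).
  pose proof (absb _ _ (H i (j+1)%Z k)). pose proof (absb _ _ (H i (j-1)%Z k)).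
  pose proof (absb _ _ (H i j (k+1)%Z)). pose proof (absb _ _ (H i j (k-1)%Z)). lra.
Qed.

Lemma nb_per N v : periodic N v -> forall i j k,
  nb v (i + Z.of_nat N)%Z j k = nb v i j k /\ nb v i (j + Z.of_nat N)%Z k = nb v i j k /\
  nb v i j (k + Z.of_nat N)%Z = nb v i j k.
Proof.
  intros P i j k. unfold nb.
  pose proof (per1 N v P 1) as Q1. pose proof (per2 N v P 1) as Q2. pose proof (per3 N v P 1) as Q3.
  repeat split.
  - replace (i + Z.of_nat N + 1)%Z with ((i+1) + 1 * Z.of_nat N)%Z by lia.
    replace (i + Z.of_nat N - 1)%Z with ((i-1) + 1 * Z.of_nat N)%Z by lia.
    rewrite !Q1. rewrite !(proj1 (P i _ _)). reflexivity.
  - replace (j + Z.of_nat N + 1)%Z with ((j+1) + 1 * Z.of_nat N)%Z by lia.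
    replace (j + Z.of_nat N - 1)%Z with ((j-1) + 1 * Z.of_nat N)%Z by lia.
    rewrite !Q2. rewrite !(proj1 (proj2 (P _ j _))). reflexivity.
  - replace (k + Z.of_nat N + 1)%Z with ((k+1) + 1 * Z.of_nat N)%Z by lia.
    replace (k + Z.of_nat N - 1)%Z with ((k-1) + 1 * Z.of_nat N)%Z by lia.
    rewrite !Q3. rewrite !(proj2 (proj2 (P _ _ k))). reflexivity.
Qed.

Lemma Tm_per dt c Hdt Hc N f v : periodic N f -> periodic N v -> periodic N (Tm dt c Hdt Hc f v).
Proof.
  intros Pf Pv i j k. unfold Tm. destruct (nb_per N v Pv i j k) as [E1 [E2 E3]].
  destruct (Pf i j k) as [F1 [F2 F3]].
  rewrite E1, E2, E3, F1, F2, F3. auto.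
Qed.

Fixpoint iterT dt c Hdt Hc (f : grid) (n : nat) : grid :=
  match n with
  | O => fun _ _ _ => 0
  | S m => Tm dt c Hdt Hc f (iterT dt c Hdt Hc f m)
  end.

Lemma exist_sol dt c N (f : grid) : 0 < dt -> 0 <= c -> (0 < N)%nat -> periodic N f ->
  exists v : grid, periodic N v /\
   (forall i j k, -1 < v i j k < 1 /\ hf dt c (v i j k) = f i j k + c * nb v i j k).
Proof.
  intros Hdt Hc HN Pf.
  set (u := iterT dt c Hdt Hc f).
  set (k := kk dt c). pose proof (kk_bounds dt c Hdt Hc) as Hk. fold k in Hk.
  assert (Hin : forall n i j l, -1 < u (S n) i j l < 1) by (intros; apply Tm_prop).
  assert (L1 : forall n i j l, Rabs (u (S n) i j l - u n i j l) <= 2 * k ^ n).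
  { induction n; intros i j l.
    - pose proof (Hin 0%nat i j l). replace (u 0%nat i j l) with 0 by reflexivity. rewrite pow_O. apply Rabs_le; lra.
    - change (u (S (S n))) with (Tm dt c Hdt Hc f (u (S n))).
      change (u (S n)) with (Tm dt c Hdt Hc f (u n)) at 2.
      destruct (Tm_prop dt c Hdt Hc f (u (S n)) i j l) as [A1 B1].
      destruct (Tm_prop dt c Hdt Hc f (u n) i j l) as [A2 B2].
      replace (2 * k ^ S n) with (k * (2 * k ^ n)) by (simpl; ring).
      apply (step_lip dt c _ _ (nb (u (S n)) i j l - nb (u n) i j l)); auto.
      rewrite B1, B2; ring.
      apply nb_diff; auto. }
  assert (L2 : forall n m i j l, Rabs (u (n + m)%nat i j l - u n i j l) <= 2 * k ^ n * (1 - k ^ m) / (1 - k)).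
  { intros n m i j l. induction m.
    - rewrite Nat.add_0_r. replace (u n i j l - u n i j l) with 0 by ring. rewrite Rabs_R0.
      simpl. replace (2 * k ^ n * (1 - 1) / (1 - k)) with 0 by (field; lra). lra.
    - rewrite Nat.add_succ_r.
      replace (u (S (n + m)) i j l - u n i j l) with ((u (S (n + m)) i j l - u (n+m)%nat i j l) + (u (n + m)%nat i j l - u n i j l)) by ring.
      eapply Rle_trans. apply Rabs_triang.
      replace (2 * k ^ n * (1 - k ^ S m) / (1 - k)) with (2 * k ^ (n + m) + 2 * k ^ n * (1 - k ^ m) / (1 - k))
        by (rewrite pow_add; simpl; field; lra).
      pose proof (L1 (n + m)%nat i j l). lra. }
  assert (L2' : forall n m i j l, Rabs (u (n + m)%nat i j l - u n i j l) <= 2 * k ^ n / (1 - k)).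
  { intros. eapply Rle_trans. apply L2. unfold Rdiv. apply Rmult_le_compat_r.
    left; apply Rinv_0_lt_compat; lra. pose proof (pow_le k m (proj1 Hk)). pose proof (pow_le k n (proj1 Hk)). nra. }
  assert (Hpow : forall y, 0 < y -> exists N0, k ^ N0 < y).
  { intros y Hy. destruct (pow_lt_1_zero k ltac:(rewrite Rabs_right; lra) y Hy) as [N0 HN0].
    exists N0. specialize (HN0 N0 (le_n _)). rewrite Rabs_right in HN0; auto. apply Rle_ge, pow_le; lra. }
  assert (Cau : forall i j l, Cauchy_crit (fun n => u n i j l)).
  { intros i j l e He. destruct (Hpow (e * (1 - k) / 4)) as [N0 HN0].
    { apply Rmult_lt_0_compat. nra. lra. }
    exists N0. intros n m Hn Hm. unfold R_dist.
    pose proof (L2' N0 (n - N0)%nat i j l). pose proof (L2' N0 (m - N0)%nat i j l).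
    replace (N0 + (n - N0))%nat with n in H by lia. replace (N0 + (m - N0))%nat with m in H0 by lia.
    assert (2 * k ^ N0 / (1 - k) < e / 2).
    { apply (Rmult_lt_reg_r (1 - k)). lra. unfold Rdiv. rewrite Rmult_assoc, Rinv_l by lra. nra. }
    pose proof (absb _ _ H). pose proof (absb _ _ H0). apply Rabs_def1; lra. }
  set (Lm := fun i j l => proj1_sig (R_complete _ (Cau i j l))).
  assert (Lcv : forall i j l, Un_cv (fun n => u n i j l) (Lm i j l)).
  { intros. unfold Lm. destruct (R_complete _ _). simpl. auto. }
  assert (L3 : forall n i j l, Rabs (Lm i j l - u n i j l) <= 2 * k ^ n / (1 - k)).
  { intros n i j l. destruct (Rle_dec (Rabs (Lm i j l - u n i j l)) (2 * k ^ n / (1 - k))) as [?|Hc']; auto.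
    exfalso. apply Rnot_le_lt in Hc'.
    destruct (Lcv i j l (Rabs (Lm i j l - u n i j l) - 2 * k ^ n / (1 - k)) ltac:(lra)) as [N0 HN0].
    specialize (HN0 (N0 + n)%nat ltac:(lia)). unfold R_dist in HN0.
    pose proof (L2' n N0 i j l). replace (n + N0)%nat with (N0 + n)%nat in H by lia.
    pose proof (Rabs_triang (Lm i j l - u (N0 + n)%nat i j l) (u (N0 + n)%nat i j l - u n i j l)).
    replace (Lm i j l - u (N0 + n)%nat i j l + (u (N0 + n)%nat i j l - u n i j l)) with (Lm i j l - u n i j l) in H0 by ring.
    rewrite Rabs_minus_sym in HN0. lra. }
  assert (Fix : forall i j l, Lm i j l = Tm dt c Hdt Hc f Lm i j l).
  { intros i j l. destruct (Req_dec (Lm i j l) (Tm dt c Hdt Hc f Lm i j l)) as [?|Hne]; auto.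
    exfalso. pose proof (Rabs_pos_lt _ (Rminus_eq_contra _ _ Hne)) as Hc'.
    destruct (Hpow (Rabs (Lm i j l - Tm dt c Hdt Hc f Lm i j l) * (1 - k) / 8)) as [n Hn].
    { apply Rmult_lt_0_compat. nra. lra. }
    pose proof (L3 (S n) i j l).
    assert (Rabs (Tm dt c Hdt Hc f (u n) i j l - Tm dt c Hdt Hc f Lm i j l) <= k * (2 * k ^ n / (1 - k))).
    { destruct (Tm_prop dt c Hdt Hc f (u n) i j l) as [A1 B1].
      destruct (Tm_prop dt c Hdt Hc f Lm i j l) as [A2 B2].
      apply (step_lip dt c _ _ (nb (u n) i j l - nb Lm i j l)); auto.
      rewrite B1, B2; ring.
      apply nb_diff; intros; rewrite Rabs_minus_sym; apply L3. }
    change (u (S n)) with (Tm dt c Hdt Hc f (u n)) in H.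
    pose proof (Rabs_triang (Lm i j l - Tm dt c Hdt Hc f (u n) i j l) (Tm dt c Hdt Hc f (u n) i j l - Tm dt c Hdt Hc f Lm i j l)).
    replace (Lm i j l - Tm dt c Hdt Hc f (u n) i j l + (Tm dt c Hdt Hc f (u n) i j l - Tm dt c Hdt Hc f Lm i j l))
      with (Lm i j l - Tm dt c Hdt Hc f Lm i j l) in H1 by ring.
    assert (4 * k ^ n / (1 - k) < Rabs (Lm i j l - Tm dt c Hdt Hc f Lm i j l) / 2).
    { apply (Rmult_lt_reg_r (1 - k)). lra. unfold Rdiv. rewrite Rmult_assoc, Rinv_l by lra. nra. }
    assert (2 * k ^ S n / (1 - k) + k * (2 * k ^ n / (1 - k)) <= 4 * k ^ n / (1 - k)).
    { simpl. unfold Rdiv. pose proof (pow_le k n (proj1 Hk)).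
      assert (0 < / (1 - k)) by (apply Rinv_0_lt_compat; lra).
      assert (0 <= k ^ n * / (1-k)) by (apply Rmult_le_pos; lra).
      assert (k * (k ^ n * / (1-k)) <= k ^ n * / (1-k)) by nra.
      replace (2 * (k * k ^ n) * / (1 - k) + k * (2 * k ^ n * / (1 - k))) with (4 * (k * (k ^ n * / (1-k)))) by ring.
      lra. }
    lra. }
  assert (Pu : forall n, periodic N (u n)).
  { induction n. intros i j l; simpl; auto. apply Tm_per; auto. }
  exists Lm. split.
  - intros i j l.
    assert (G : forall g : nat -> grid, (forall n, periodic N (g n)) -> forall a b c' a' b' c'' LL,
      (forall n, g n a b c' = g n a' b' c'') -> Un_cv (fun n => g n a b c') LL ->
      Un_cv (fun n => g n a' b' c'') LL).
    { intros g _ a b c' a' b' c'' LL E Hc'. intros e He. destruct (Hc' e He) as [N0 HN0]. exists N0.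
      intros n Hn. rewrite <- E. auto. }
    split; [|split].
    + apply (UL_sequence (fun n => u n (i + Z.of_nat N)%Z j l)). apply Lcv.
      apply (G u Pu i j l). intros; symmetry; apply Pu. apply Lcv.
    + apply (UL_sequence (fun n => u n i (j + Z.of_nat N)%Z l)). apply Lcv.
      apply (G u Pu i j l). intros; symmetry; apply Pu. apply Lcv.
    + apply (UL_sequence (fun n => u n i j (l + Z.of_nat N)%Z)). apply Lcv.
      apply (G u Pu i j l). intros; symmetry; apply Pu. apply Lcv.
  - intros i j l. rewrite (Fix i j l). apply Tm_prop. 
Qed.

Lemma uniq_sol dt c (f v w : grid) : 0 < dt -> 0 <= c ->
  (forall i j k, -1 < v i j k < 1 /\ hf dt c (v i j k) = f i j k + c * nb v i j k) ->
  (forall i j k, -1 < w i j k < 1 /\ hf dt c (w i j k) = f i j k + c * nb w i j k) ->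
  forall i j k, v i j k = w i j k.
Proof.
  intros Hdt Hc Hv Hw.
  set (k := kk dt c). pose proof (kk_bounds dt c Hdt Hc) as Hk. fold k in Hk.
  assert (B : forall n i j l, Rabs (v i j l - w i j l) <= 2 * k ^ n).
  { induction n; intros i j l.
    - destruct (Hv i j l) as [A _]; destruct (Hw i j l) as [A' _]. rewrite pow_O. apply Rabs_le; lra.
    - destruct (Hv i j l) as [A1 B1]; destruct (Hw i j l) as [A2 B2].
      replace (2 * k ^ S n) with (k * (2 * k ^ n)) by (simpl; ring).
      apply (step_lip dt c _ _ (nb v i j l - nb w i j l)); auto.
      rewrite B1, B2; ring.
      apply nb_diff; auto. }
  intros i j l. destruct (Req_dec (v i j l) (w i j l)) as [?|Hne]; auto. exfalso.
  pose proof (Rabs_pos_lt _ (Rminus_eq_contra _ _ Hne)) as Hp.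
  destruct (pow_lt_1_zero k ltac:(rewrite Rabs_right; lra) (Rabs (v i j l - w i j l) / 4) ltac:(lra)) as [N0 HN0].
  specialize (HN0 N0 (le_n _)). rewrite Rabs_right in HN0 by (apply Rle_ge, pow_le; lra).
  specialize (B N0 i j l). lra.
Qed.

Lemma scheme_iff eps theta0 dt h (phin phi1 : grid) i j k : 0 < dt -> h <> 0 ->
  ((phi1 i j k - phin i j k) / dt = - mu_next eps theta0 h phin phi1 i j k <->
   hf dt (eps ^ 2 / h ^ 2) (phi1 i j k) = (/dt + theta0) * phin i j k + (eps ^ 2 / h ^ 2) * nb phi1 i j k).
Proof.
  intros Hdt Hh. unfold mu_next, lap_h, hf.
  change (phi1 (i + 1)%Z j k + phi1 (i - 1)%Z j k + phi1 i (j + 1)%Z k + phi1 i (j - 1)%Z k +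
          phi1 i j (k + 1)%Z + phi1 i j (k - 1)%Z) with (nb phi1 i j k).
  set (x := phi1 i j k). set (y := phin i j k). set (S := nb phi1 i j k).
  set (A := ln (1 + x)). set (B := ln (1 - x)).
  assert (E : (x - y) / dt - - (A - B - theta0 * y - eps ^ 2 * ((S - 6 * x) / h ^ 2)) =
     (x / dt + (A - B) + 6 * (eps ^ 2 / h ^ 2) * x) - ((/ dt + theta0) * y + eps ^ 2 / h ^ 2 * S))
    by (field; split; lra || auto).
  split; intro H; lra.
Qed.

Lemma hf0_odd dt m : hf dt 0 (- m) = - hf dt 0 m.
Proof. unfold hf. replace (1 - - m) with (1 + m) by ring. replace (1 + - m) with (1 - m) by ring. unfold Rdiv. ring.
Qed.

Theorem theorem2p2 (L theta0 dt : R) (N : nat) :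
  0 < L -> 0 < theta0 -> 0 < dt -> (0 < N)%nat ->
  (* unique solvability with ||phi^{n+1}||_inf < 1 *)
  (forall eps : R, 0 < eps ->
   forall M : R, 0 < M ->
   forall phin : grid, periodic N phin -> normInf N phin <= M ->
   exists! phi1 : grid,
     periodic N phi1 /\ normInf N phi1 < 1 /\
     scheme_step eps theta0 dt (L / INR N) phin phi1) /\
  (* uniform separation from the singular values, independent of eps and n *)
  (forall delta0 : R, 0 < delta0 < 1 ->
   exists dstar : R, 0 < dstar < 1 /\
   forall eps : R, 0 < eps ->
   forall phi : nat -> grid,
     periodic N (phi 0%nat) -> normInf N (phi 0%nat) <= 1 - delta0 ->
     (forall n : nat, periodic N (phi (S n)) /\ normInf N (phi (S n)) < 1 /\
        scheme_step eps theta0 dt (L / INR N) (phi n) (phi (S n))) ->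
     forall n : nat, normInf N (phi n) <= 1 - dstar).
Proof.
  intros HL Hth Hdt HN.
  assert (HNr : 0 < INR N) by (apply lt_0_INR; lia).
  assert (Hh : 0 < L / INR N) by (apply Rdiv_lt_0_compat; auto).
  assert (Hinv : 0 < / dt) by (apply Rinv_0_lt_compat; lra).
  assert (Hcpos : forall eps, 0 <= eps ^ 2 / (L / INR N) ^ 2).
  { intros eps. unfold Rdiv. apply Rmult_le_pos. apply pow2_ge_0. left; apply Rinv_0_lt_compat, pow_lt; auto. }
  split.
  - intros eps Heps M HM phin Pn _.
    set (h := L / INR N) in *. set (c := eps ^ 2 / h ^ 2).
    pose proof (Hcpos eps) as Hc. fold h c in Hc.
    set (f := fun i j k => (/ dt + theta0) * phin i j k).
    assert (Pf : periodic N f).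
    { intros i j k. unfold f. destruct (Pn i j k) as [? [? ?]]. rewrite H, H0, H1. auto. }
    destruct (exist_sol dt c N f Hdt Hc HN Pf) as [v [Pv Hv]].
    exists v. split.
    + split; [auto|split].
      * apply normInf_lt. intros; apply Hv.
      * intros i j k. apply scheme_iff; [lra|lra|]. apply (Hv i j k).
    + intros w [Pw [Nw Sw]].
      apply functional_extensionality; intro i.
      apply functional_extensionality; intro j.
      apply functional_extensionality; intro k.
      apply (uniq_sol dt c f v w Hdt Hc Hv).
      intros i' j' k'. split.
      * pose proof (per_bound N w HN Pw i' j' k'). apply absb in H. lra.
      * apply (proj1 (scheme_iff eps theta0 dt h phin w i' j' k' Hdt ltac:(lra))). apply Sw.
  - intros d0 Hd0.
    assert (He : 0 < exp (- theta0) < 1).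
    { split. apply exp_pos. assert (exp (- theta0) < exp 0) by (apply exp_increasing; lra). rewrite exp_0 in H; exact H. }
    exists (Rmin d0 (exp (- theta0))). split.
    { split. apply Rmin_glb_lt; lra. pose proof (Rmin_l d0 (exp (- theta0))). lra. }
    intros eps Heps phi P0 N0 Hstep.
    set (h := L / INR N) in *. set (c := eps ^ 2 / h ^ 2).
    pose proof (Hcpos eps) as Hc. fold h c in Hc.
    set (c0 := 1 - Rmin d0 (exp (- theta0))).
    pose proof (Rmin_l d0 (exp (- theta0))). pose proof (Rmin_r d0 (exp (- theta0))).
    assert (Hmin : 0 < Rmin d0 (exp (- theta0))) by (apply Rmin_glb_lt; lra).
    assert (Fc0 : (/ dt + theta0) * c0 <= hf dt 0 c0).
    { unfold hf. assert (ln (1 - c0) <= - theta0).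
      { rewrite <- (ln_exp (- theta0)). apply ln_le'; unfold c0; lra. }
      assert (0 <= ln (1 + c0)) by (rewrite <- ln_1; apply ln_le'; unfold c0; lra).
      unfold Rdiv. assert (c0 <= 1) by (unfold c0; lra). assert (0 <= c0) by (unfold c0; lra). nra. }
    assert (Per : forall n, periodic N (phi n)) by (intros [|n]; [auto|apply Hstep]).
    assert (Main : forall n, normInf N (phi n) <= c0).
    { induction n. unfold c0; lra.
      destruct (Hstep n) as [P1 [Nm1 S1]].
      destruct (normInf_arg N (phi (S n)) HN) as [i [j [k Em]]].
      set (m := normInf N (phi (S n))) in *.
      destruct (Rle_dec m c0) as [?|Hgt]; auto. exfalso. apply Rnot_le_lt in Hgt.
      assert (Hb1 : forall i j k, Rabs (phi (S n) i j k) <= m) by (intros; apply per_bound; auto).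
      assert (Hb0 : forall i j k, Rabs (phi n i j k) <= normInf N (phi n)) by (intros; apply per_bound; auto).
      pose proof (proj1 (scheme_iff eps theta0 dt h (phi n) (phi (S n)) i j k Hdt ltac:(lra)) (S1 i j k)) as Eq.
      fold c in Eq.
      assert (Hnb : Rabs (nb (phi (S n)) i j k) <= 6 * m).
      { pose proof (nb_diff (phi (S n)) (fun _ _ _ => 0) m i j k) as Q.
        assert (Z0 : nb (fun _ _ _ => 0) i j k = 0) by (unfold nb; ring).
        rewrite Z0, Rminus_0_r in Q. apply Q.
        intros; rewrite Rminus_0_r; auto. }
      apply absb in Hnb.
      pose proof (absb _ _ (Hb0 i j k)) as Hpn.
      assert (Hm1 : m < 1) by lra.
      assert (hfc : forall x, hf dt c x = hf dt 0 x + 6 * c * x) by (intros; unfold hf; ring).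
      pose proof (hf_mono dt 0 m c0 Hdt ltac:(lra) ltac:(unfold c0; lra) ltac:(lra) Hm1) as Mono.
      assert (Hm0 : 0 <= m) by (rewrite <- Em; apply Rabs_pos).
      assert (Hcm : 0 <= c * m) by nra.
      destruct (Rle_dec 0 (phi (S n) i j k)).
      + rewrite Rabs_right in Em by lra. rewrite Em, hfc in Eq.
        assert (hf dt 0 m <= (/dt + theta0) * c0).
        { assert ((/ dt + theta0) * phi n i j k <= (/ dt + theta0) * c0) by (apply Rmult_le_compat_l; lra).
          assert (c * nb (phi (S n)) i j k <= c * (6 * m)) by (apply Rmult_le_compat_l; lra). lra. }
        nra.
      + rewrite Rabs_left in Em by lra.
        replace (phi (S n) i j k) with (- m) in Eq by lra. rewrite hfc, hf0_odd in Eq.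
        assert (hf dt 0 m <= (/dt + theta0) * c0).
        { assert (-((/ dt + theta0) * c0) <= (/ dt + theta0) * phi n i j k) by nra.
          assert (c * (- (6 * m)) <= c * nb (phi (S n)) i j k) by (apply Rmult_le_compat_l; lra). lra. }
        nra. }
    intros n. apply Main.
Qed.
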